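(* Let $\langle A,\to\rangle$ be a conditional algebra and let $B$ be (the domain of) a Boolean subalgebra of $A$. Then the following are equivalent: (1) $E_B$ is a C-equivalence on the expanded Stone space $\langle\mathrm{Ul}(A),\tau_s,T_A\rangle$; (2) $B$ is closed under $\to$, i.e., $\langle B,\to\rangle$ is a subalgebra of $\langle A,\to\rangle$.
   Context: A conditional algebra is $\langle A,\to\rangle$ with $A$ a Boolean algebra and $\to$ binary with $a\to1=1$, $(a\to b)\wedge(a\to c)=a\to(b\wedge c)$, $(a\vee b)\to c\le(a\to c)\wedge(b\to c)$. $\mathrm{Ul}(A)$ is the Stone space of ultrafilters (closed sets are exactly the sets $\varphi(F)=\{u:F\subseteq u\}$, $F$ a filter, the improper filter $A$ included). $D^{\to}_u(F)=\{b:\exists a\in F,\ a\to b\in u\}$; $T_A(u,Z,v)$ iff there is a filter $F$ with $Z=\varphi(F)$ and $D^{\to}_u(F)\subseteq v$. $E_B=\{(u,v)\in\mathrm{Ul}(A)^2: u\cap B=v\cap B\}$. For an equivalence $E$ on a space $X$ with relation $T$ and closed sets $Y,C$: $Y\preceq_E C$ iff for every $y\in Y$ there is $x\in C$ with $E(x,y)$. $E$ is a C-equivalence if $E$ is a Boolean equivalence (for each $(x,y)\notin E$ there is a clopen set closed under $E$ containing $x$ but not $y$) and for all $x,x',y\in X$ and closed $Y$, if $E(x,y)$ and $T(x,Y,x')$ then there exist $y'$ with $E(x',y')$ and closed $C$ with $T(y,C,y')$ and $C\preceq_E Y$. *)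

(* Defs.v *)
(* Boolean algebras as complemented distributive lattices
   (ctbDistrLatticeType) from mathcomp's order library. *)
From HB Require Import structures.
From mathcomp Require Import all_boot all_order.
Set Implicit Arguments. Unset Strict Implicit. Unset Printing Implicit Defensive.
Import Order.Theory.
Local Open Scope order_scope.

Section BooleanAlgebra.
Context {disp : Order.disp_t} {A : ctbDistrLatticeType disp}.

Definition conditional_algebra (imp : A -> A -> A) : Prop :=
  [/\ forall a, imp a \top = \top,
      forall a b c, imp a b `&` imp a c = imp a (b `&` c)
    & forall a b c, imp (a `|` b) c <= imp a c `&` imp b c].

Definition boolean_subalgebra (B : A -> Prop) : Prop :=
  [/\ B \bot, B \top,
      forall a b, B a -> B b -> B (a `&` b),
      forall a b, B a -> B b -> B (a `|` b)
    & forall a, B a -> B (~` a)].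

(* Filters (the improper filter A included). *)
Definition is_filter (F : A -> Prop) : Prop :=
  [/\ F \top,
      forall a b, F a -> a <= b -> F b
    & forall a b, F a -> F b -> F (a `&` b)].

Definition proper_filter (F : A -> Prop) : Prop := is_filter F /\ ~ F \bot.

Definition is_ultrafilter (u : A -> Prop) : Prop :=
  proper_filter u /\
  forall G, proper_filter G -> (forall a, u a -> G a) -> forall a, G a -> u a.

End BooleanAlgebra.

Record Ul {disp : Order.disp_t} (A : ctbDistrLatticeType disp) := mkUl {
  uset :> A -> Prop;
  uset_ultra : is_ultrafilter uset }.

Section Stone.
Context {disp : Order.disp_t} {A : ctbDistrLatticeType disp}.

Definition phi (F : A -> Prop) : Ul A -> Prop := fun u => forall a, F a -> u a.

Definition stone_closed (Z : Ul A -> Prop) : Prop :=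
  exists F, is_filter F /\ Z = phi F.
Definition stone_open (Z : Ul A -> Prop) : Prop :=
  stone_closed (fun u => ~ Z u).
Definition stone_clopen (Z : Ul A -> Prop) : Prop :=
  stone_closed Z /\ stone_open Z.

Definition Dimp (imp : A -> A -> A) (u : Ul A) (F : A -> Prop) : A -> Prop :=
  fun b => exists2 a, F a & u (imp a b).

Definition T_A (imp : A -> A -> A) (u : Ul A) (Z : Ul A -> Prop) (v : Ul A) : Prop :=
  exists F, [/\ is_filter F, Z = phi F & forall b, Dimp imp u F b -> v b].

Definition E_B (B : A -> Prop) (u v : Ul A) : Prop :=
  forall a, B a -> (u a <-> v a).

End Stone.

Section CEquiv.
Variable X : Type.
Variable closed clopen : (X -> Prop) -> Prop.
Variable T : X -> (X -> Prop) -> X -> Prop.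
Variable E : X -> X -> Prop.

Definition E_preceq (Y C : X -> Prop) : Prop :=
  forall y, Y y -> exists2 x, C x & E x y.

Definition E_closed_set (U : X -> Prop) : Prop :=
  forall x y, E x y -> U x -> U y.

Definition boolean_equivalence : Prop :=
  forall x y, ~ E x y ->
    exists U, [/\ clopen U, E_closed_set U, U x & ~ U y].

Definition C_equivalence : Prop :=
  [/\ (forall x, E x x) /\ (forall x y, E x y -> E y x) /\
        (forall x y z, E x y -> E y z -> E x z),
      boolean_equivalence
    & forall x x' y Y, closed Y -> E x y -> T x Y x' ->
        exists y', E x' y' /\
          exists C, [/\ closed C, T y C y' & E_preceq C Y]].
End CEquiv.

(* Main.v *)
Require Import Defs.
From mathcomp Require Import all_boot all_order.
From mathcomp Require Import classical_sets.
From Stdlib Require Import Classical FunctionalExtensionality PropExtensionality.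

Set Implicit Arguments. Unset Strict Implicit. Unset Printing Implicit Defensive.
Import Order.Theory.
Local Open Scope order_scope.

Section Helpers.
Context {disp : Order.disp_t} {A : ctbDistrLatticeType disp}.
Implicit Types (F G : A -> Prop) (a b c d e : A).

Lemma disjC (x y : A) : x `&` y <= \bot -> x <= ~` y.
Proof. by rewrite -disj_leC -lex0. Qed.

Definition up a : A -> Prop := fun b => a <= b.

Lemma up_filter a : is_filter (up a).
Proof.
split; rewrite /up.
- exact: lex1.
- by move=> x y h1 h2; exact: le_trans h2.
- by move=> x y h1 h2; rewrite lexI h1 h2.
Qed.

Definition Join F1 F2 : A -> Prop :=
  fun b => exists f1, exists f2, [/\ F1 f1, F2 f2 & f1 `&` f2 <= b].

Lemma Join_filter F1 F2 : is_filter F1 -> is_filter F2 -> is_filter (Join F1 F2).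
Proof.
move=> [t1 u1 m1] [t2 u2 m2]; split.
- by exists \top, \top; split => //; exact: lex1.
- move=> x y [f1 [f2 [h1 h2 h3]]] hxy; exists f1, f2; split => //; exact: le_trans hxy.
- move=> x y [f1 [f2 [h1 h2 h3]]] [g1 [g2 [k1 k2 k3]]].
  exists (f1 `&` g1), (f2 `&` g2); split; [exact: m1|exact: m2|].
  rewrite lexI; apply/andP; split.
  + apply: le_trans h3; apply: leI2; exact: leIl.
  + apply: le_trans k3; apply: leI2; exact: leIr.
Qed.

Lemma Join_l F1 F2 : is_filter F2 -> forall a, F1 a -> Join F1 F2 a.
Proof. by move=> [t2 _ _] a h; exists a, \top; split => //; exact: leIl. Qed.

Lemma Join_r F1 F2 : is_filter F1 -> forall a, F2 a -> Join F1 F2 a.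
Proof. by move=> [t1 _ _] a h; exists \top, a; split => //; exact: leIr. Qed.

Lemma ultra_ext F : proper_filter F -> exists u : Ul A, forall a, F a -> u a.
Proof.
move=> PF.
pose P : set (set A) := fun G => (forall a, ~ G a) \/ (proper_filter G /\ (forall a, F a -> G a)).
have [M [PM Mmax]] : exists M, P M /\ forall B, (M `<` B)%classic -> ~ P B.
  apply: Zorn_bigcup => Fam FamP tot.
  case: (classic (exists X, Fam X /\ exists a, X a)) => [[X0 [FX0 [a0 Xa0]]]|none].
  - right.
    have nonemp X a : Fam X -> X a -> proper_filter X /\ (forall a, F a -> X a).
      move=> FX Xa; case: (FamP X FX) => // h; exfalso; exact: (h a).
    have [[[t0 u0 m0] nb0] sub0] := nonemp X0 a0 FX0 Xa0.
    split; [split; [split|]|].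
    + by exists X0.
    + move=> x y [X FX Xx] hxy; exists X => //.
      have [[[_ uX _] _] _] := nonemp X x FX Xx; exact: uX hxy.
    + move=> x y [X FX Xx] [Y FY Yy].
      have [XY|YX] := tot X Y FX FY.
      * exists Y => //; have [[[_ _ mY] _] _] := nonemp Y y FY Yy; apply: mY => //; exact: XY.
      * exists X => //; have [[[_ _ mX] _] _] := nonemp X x FX Xx; apply: mX => //; exact: YX.
    + move=> [X FX Xb]; have [[_ nb] _] := nonemp X _ FX Xb; exact: nb.
    + by move=> a Fa; exists X0 => //; apply: sub0.
  - by left => a [X FX Xa]; apply: none; exists X; split => //; exists a.
have [Mempty|[PMf subM]] := PM.
  exfalso; apply: (Mmax F); last by right.
  split; first by move=> a Ma; exfalso; exact: (Mempty a).
  move=> h; case: PF => [[t _ _] _]; exact: (Mempty _ (h _ t)).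
have Mu : is_ultrafilter M.
  split => // G PG MG a Ga.
  apply: NNPP => nMa; apply: (Mmax G); last by right; split => // b Fb; apply: MG; apply: subM.
  split => // h; exact: nMa (h _ Ga).
by exists (mkUl Mu).
Qed.

Lemma ultra_join F1 F2 : is_filter F1 -> is_filter F2 ->
  (forall f1 f2, F1 f1 -> F2 f2 -> ~ (f1 `&` f2 <= \bot)) ->
  exists u : Ul A, (forall a, F1 a -> u a) /\ (forall a, F2 a -> u a).
Proof.
move=> f1 f2 h.
have [u hu] : exists u : Ul A, forall a, Join F1 F2 a -> u a.
  apply: ultra_ext; split; first exact: Join_filter.
  by rewrite /Join => -[g1 [g2 [k1 k2 k3]]]; exact: (h _ _ k1 k2 k3).
exists u; split => a ha; apply: hu; [exact: Join_l|exact: Join_r].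
Qed.

Lemma ufilter (u : Ul A) : is_filter u.
Proof. exact: (uset_ultra u).1.1. Qed.

Lemma unbot (u : Ul A) : ~ u \bot.
Proof. exact: (uset_ultra u).1.2. Qed.

Lemma uup (u : Ul A) a b : u a -> a <= b -> u b.
Proof. by case: (ufilter u) => _ h _; apply: h. Qed.

Lemma uI (u : Ul A) a b : u a -> u b -> u (a `&` b).
Proof. by case: (ufilter u) => _ _ h; apply: h. Qed.

Lemma uC2 (u : Ul A) a : u a -> u (~` a) -> False.
Proof. by move=> h1 h2; have := uI h1 h2; rewrite meetxC; exact: unbot. Qed.

Lemma uC1 (u : Ul A) a : ~ u a -> u (~` a).
Proof.
move=> nua; apply: NNPP => nuc.
have [[Fu Nb] Mx] := uset_ultra u.
have JF : is_filter (Join u (up a)) := Join_filter Fu (up_filter a).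
apply: nua; apply: (Mx (Join u (up a))).
- split => // -[f1 [f2 [k1 k2 k3]]]; apply: nuc; apply: uup k1 _.
  apply: disjC; apply: le_trans k3; apply: leI2 => //.
- move=> b ub; exact: Join_l (up_filter a) _ ub.
- exact: Join_r Fu _ (lexx a).
Qed.

Lemma uT (u : Ul A) : u \top.
Proof. by case: (ufilter u). Qed.

End Helpers.

Section Imp.
Context {disp : Order.disp_t} {A : ctbDistrLatticeType disp}.
Variable imp : A -> A -> A.
Hypothesis CA : conditional_algebra imp.

Lemma imp_mono2 (a b c : A) : b <= c -> imp a b <= imp a c.
Proof.
move=> bc; case: CA => _ h2 _.
rewrite -(meet_l bc) -h2; exact: leIr.
Qed.

Lemma imp_anti1 (a a' c : A) : a <= a' -> imp a' c <= imp a c.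
Proof.
move=> h; case: CA => _ _ h3.
rewrite -(join_r h); apply: le_trans (h3 a a' c) _; exact: leIl.
Qed.

Lemma Dimp_filter (u : Ul A) F : is_filter F -> is_filter (Dimp imp u F).
Proof.
move=> [tF uF mF]; case: CA => h1 h2 h3; split.
- by exists \top => //; rewrite h1; exact: uT.
- move=> x y [a Fa ua] xy; exists a => //; apply: uup ua _; exact: imp_mono2.
- move=> x y [a Fa ua] [b Fb ub]; exists (a `&` b); first exact: mF.
  rewrite -h2; apply: uI.
  + apply: uup ua _; apply: imp_anti1; exact: leIl.
  + apply: uup ub _; apply: imp_anti1; exact: leIr.
Qed.
End Imp.

Section Sub.
Context {disp : Order.disp_t} {A : ctbDistrLatticeType disp}.
Variable B : A -> Prop.
Hypothesis BS : boolean_subalgebra B.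

Definition BU (u : Ul A) : A -> Prop := fun b => exists2 c, B c /\ u c & c <= b.

Lemma BU_filter u : is_filter (BU u).
Proof.
case: BS => _ BT BI _ _; split.
- by exists \top => //; split => //; exact: uT.
- move=> x y [c [Bc uc] cx] xy; exists c => //; exact: le_trans xy.
- move=> x y [c [Bc uc] cx] [d [Bd ud] dy]; exists (c `&` d).
  + split; [exact: BI|exact: uI].
  + exact: leI2.
Qed.

Lemma agree (u v : Ul A) : (forall c, B c -> u c -> v c) -> E_B B u v.
Proof.
move=> h a Ba; split; first exact: h.
move=> va; apply: NNPP => nua; apply: (uC2 va); apply: h; last exact: uC1.
by case: BS => _ _ _ _ hC; apply: hC.
Qed.

Lemma E_sym (u v : Ul A) : E_B B u v -> E_B B v u.
Proof. by move=> h a Ba; split => H; apply/(h a Ba). Qed.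
End Sub.

Lemma phi_up {disp : Order.disp_t} {A : ctbDistrLatticeType disp} (a : A) (w : Ul A) :
  phi (up a) w <-> w a.
Proof.
split; first by move=> h; apply: h; rewrite /up.
by move=> wa b ab; exact: uup wa ab.
Qed.

Theorem theorem7p5 (disp : Order.disp_t) (A : ctbDistrLatticeType disp)
  (imp : A -> A -> A) (B : A -> Prop) :
  conditional_algebra imp -> boolean_subalgebra B ->
  (C_equivalence (@stone_closed _ A) (@stone_clopen _ A) (T_A imp) (E_B B)
   <-> (forall a b, B a -> B b -> B (imp a b))).
Proof.
move=> CA BS; have [Bbot BT BI BJ BC] := BS.
split.
- move=> [_ _ Ceq] a b Ba Bb; apply: NNPP => nBc.
  pose c := imp a b.
  pose Uc : A -> Prop := fun e => exists2 d, B d /\ c <= d & d <= e.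
  have Ucf : is_filter Uc.
    split.
    + by exists \top => //; split => //; exact: lex1.
    + move=> x y [d [Bd cd] dx] xy; exists d => //; exact: le_trans xy.
    + move=> x y [d [Bd cd] dx] [d' [Bd' cd'] dy]; exists (d `&` d').
      * by split; [exact: BI|rewrite lexI cd cd'].
      * exact: leI2.
  destruct (ultra_join (up_filter (~` c)) Ucf) as [y [yc yU]].
    move=> f1 f2 h1 [d [Bd cd] df] hb; apply: nBc.
    have dc : d <= c.
      rewrite -(complK c); apply: disjC; rewrite meetC.
      exact: le_trans (leI2 h1 df) hb.
    by rewrite -/c -(@le_anti _ _ d c (introT andP (conj dc cd))).
  have yc' : y (~` c) := yc _ (lexx _).
  destruct (ultra_join (up_filter c) (BU_filter BS y)) as [x [xc xB]].
    move=> f1 f2 h1 [d [Bd yd] df] hb.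
    have cd : c <= ~` d := disjC (le_trans (leI2 h1 df) hb).
    apply: (uC2 yd); apply: yU; exists (~` d) => //; split => //; exact: BC.
  have Eyx : E_B B y x by apply: (agree BS) => e Be ye; apply: xB; by exists e; [split|exact: lexx].
  destruct (ultra_join (Dimp_filter CA y (up_filter a)) (up_filter (~` b))) as [y' [y'D y'b]].
    move=> f1 f2 [a' aa' ya'] h2 hb.
    have f1b : f1 <= b.
      rewrite -(complK b); apply: disjC; exact: le_trans (leI2 (lexx f1) h2) hb.
    apply: (uC2 _ yc'); apply: uup ya' _.
    exact: le_trans (imp_anti1 CA _ aa') (imp_mono2 CA _ f1b).
  have clY : stone_closed (phi (up a)) by exists (up a); split => //; exact: up_filter.
  have TY : T_A imp y (phi (up a)) y' by exists (up a); split => //; exact: up_filter.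
  have [y'' [Ey'y'' [C [_ [G [Gf CG DG]] pre]]]] := Ceq y y' x _ clY Eyx TY.
  have Ga : G a.
    apply: NNPP => nGa.
    destruct (ultra_join Gf (up_filter (~` a))) as [w [wG wa]].
      move=> f1 f2 h1 h2 hb; apply: nGa; case: Gf => _ uG _; apply: uG h1 _.
      rewrite -(complK a); apply: disjC; exact: le_trans (leI2 (lexx f1) h2) hb.
    have wC : C w by rewrite CG => e Ge; exact: wG.
    have [z za Ezw] := pre w wC.
    move/phi_up: za => za; have wa' := (Ezw a Ba).1 za.
    exact: uC2 wa' (wa _ (lexx _)).
  have y''b : y'' b by apply: DG; exists a => //; exact: xc (lexx _).
  have y'b' := (Ey'y'' b Bb).2 y''b.
  exact: uC2 y'b' (y'b _ (lexx _)).
- move=> Bimp; split.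
  + split; [|split].
    * by move=> u a _; split.
    * by move=> u v; apply: E_sym.
    * by move=> u v w h1 h2 a Ba; have := h1 a Ba; have := h2 a Ba; tauto.
  + move=> u v nE.
    have [a [Ba hne]] : exists a, B a /\ ~ (u a <-> v a).
      apply: NNPP => h; apply: nE => a Ba; apply: NNPP => h'; apply: h; exists a; split => //.
    have key : forall a0, B a0 -> u a0 -> ~ v a0 ->
        exists U, [/\ stone_clopen U, E_closed_set (E_B B) U, U u & ~ U v].
      move=> a0 Ba0 ua nva; exists (phi (up a0)); split.
      * split; first by exists (up a0); split => //; exact: up_filter.
        exists (up (~` a0)); split; first exact: up_filter.
        apply: functional_extensionality => w; apply: propositional_extensionality.
        split.
        - move=> h; apply/phi_up; apply: uC1 => wa; apply: h; exact/phi_up.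
        - by move=> /phi_up h1 /phi_up h2; exact: uC2 h2 h1.
      * by move=> x0 y0 Exy /phi_up xa; apply/phi_up; exact: (Exy a0 Ba0).1.
      * exact/phi_up.
      * by move/phi_up.
    case: (classic (u a)) => ua.
    * apply: (key a Ba ua) => va; apply: hne; split => //.
    * have va : v a by apply: NNPP => nva; apply: hne; split.
      apply: (key (~` a) (BC _ Ba) (uC1 ua)) => vna; exact: uC2 va vna.
  + move=> x x' y Y _ Exy [F [Ff YF DF]].
    pose G := fun b => exists2 c, B c /\ F c & c <= b.
    have Gf : is_filter G.
      case: Ff => tF uF mF; split.
      * by exists \top => //; split => //; exact: lex1.
      * move=> p q [d [Bd Fd] dp] pq; exists d => //; exact: le_trans pq.
      * move=> p q [d [Bd Fd] dp] [d' [Bd' Fd'] dq]; exists (d `&` d').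
        - by split; [exact: BI|exact: mF].
        - exact: leI2.
    destruct (ultra_join (Dimp_filter CA y Gf) (BU_filter BS x')) as [y' [y'D y'B]].
      move=> f1 f2 [c [c' [Bc' Fc'] c'c] yc] [e [Be x'e] ef] hb.
      have f1e : f1 <= ~` e := disjC (le_trans (leI2 (lexx f1) ef) hb).
      have yim : y (imp c' (~` e)).
        exact: uup yc (le_trans (imp_anti1 CA _ c'c) (imp_mono2 CA _ f1e)).
      have Bim : B (imp c' (~` e)) := Bimp _ _ Bc' (BC _ Be).
      have xim := (Exy _ Bim).2 yim.
      have x'ne : x' (~` e) by apply: DF; exists c'.
      exact: uC2 x'e x'ne.
    exists y'; split.
      by apply: (agree BS) => e Be x'e; apply: y'B; by exists e; [split|exact: lexx].
    exists (phi G); split.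
    * by exists G; split.
    * by exists G; split.
    * move=> w wG.
      destruct (ultra_join Ff (BU_filter BS w)) as [z [zF zB]].
        move=> f1 f2 Ff1 [e [Be we] ef] hb.
        have f1e : f1 <= ~` e := disjC (le_trans (leI2 (lexx f1) ef) hb).
        have wne : w (~` e).
          apply: wG; exists (~` e) => //; split; first exact: BC.
          by case: Ff => _ uF _; exact: uF Ff1 f1e.
        exact: uC2 we wne.
      exists z; first by rewrite YF.
      by apply: E_sym; apply: (agree BS) => e Be we; apply: zB; by exists e; [split|exact: lexx].
Qed.
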